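(* Let $F$ be a finite group and let $N$ be a closed, normal, $\sigma$-stable subgroup of $F^{\mathbb{Z}}$ such that $N\cap F^{[\mathbb{Z}]}=\{1\}$. Then $N$ is finite and contained in the centre of $F^{\mathbb{Z}}$.
   Context: $F^{\mathbb{Z}}$ is the group of all functions $\mathbb{Z}\to F$ with pointwise multiplication and the product topology (with $F$ discrete); $F^{[\mathbb{Z}]}$ is its subgroup of finitely supported functions; $\sigma$ is the shift automorphism $\sigma(f)(n)=f(n+1)$; $N$ is $\sigma$-stable if $\sigma(N)=N$. *)

(* Defs.v *)
From mathcomp Require Import all_boot all_order all_algebra all_fingroup.
Set Implicit Arguments. Unset Strict Implicit. Unset Printing Implicit Defensive.

Local Open Scope group_scope.

Definition seqZ (gT : finGroupType) := int -> gT.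

Definition pmul (gT : finGroupType) (f g : seqZ gT) : seqZ gT := fun n => f n * g n.
Definition pinv (gT : finGroupType) (f : seqZ gT) : seqZ gT := fun n => (f n)^-1.
Definition pone (gT : finGroupType) : seqZ gT := fun _ => 1.

Definition shift (gT : finGroupType) (f : seqZ gT) : seqZ gT := fun n => f (n + 1)%R.

Definition is_subgroupZ (gT : finGroupType) (N : seqZ gT -> Prop) : Prop :=
  N (@pone gT) /\ (forall f g, N f -> N g -> N (pmul f g)) /\
  (forall f, N f -> N (pinv f)).

Definition is_normalZ (gT : finGroupType) (N : seqZ gT -> Prop) : Prop :=
  forall f g, N f -> N (pmul (pinv g) (pmul f g)).

(* sigma(N) = N *)
Definition sigma_stable (gT : finGroupType) (N : seqZ gT -> Prop) : Prop :=
  forall h, N h <-> exists f, N f /\ shift f = h.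

(* closed in the product topology (F discrete): the complement is open, i.e.
   every point outside N has a basic cylinder neighbourhood (determined by
   finitely many coordinates) disjoint from N. *)
Definition closedZ (gT : finGroupType) (N : seqZ gT -> Prop) : Prop :=
  forall f, ~ N f -> exists S : seq int,
      forall g, (forall n, n \in S -> g n = f n) -> ~ N g.

Definition fin_supp (gT : finGroupType) (f : seqZ gT) : Prop :=
  exists S : seq int, forall n, n \notin S -> f n = 1.

Definition finite_setZ (gT : finGroupType) (N : seqZ gT -> Prop) : Prop :=
  exists s : seq (seqZ gT), forall f, N f -> exists2 i, (i < size s)%N & f = nth (@pone gT) s i.

Definition in_centreZ (gT : finGroupType) (f : seqZ gT) : Prop :=
  forall g : seqZ gT, pmul f g = pmul g f.

(* Main.v *)
Require Import Defs.
From mathcomp Require Import all_boot all_order all_algebra all_fingroup.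
From mathcomp Require Import zify.
From Stdlib Require Import ClassicalEpsilon FunctionalExtensionality Classical.
Set Implicit Arguments. Unset Strict Implicit. Unset Printing Implicit Defensive.

Import Order.TTheory GRing.Theory Num.Theory.
Local Open Scope ring_scope.

Definition pb (P : Prop) : bool := if excluded_middle_informative P then true else false.
Lemma pbP (P : Prop) : pb P = true <-> P.
Proof. rewrite /pb; case: excluded_middle_informative => //. Qed.

Lemma chain_sub (T : finType) (A : nat -> {set T}) :
  (forall k, A k.+1 \subset A k) -> forall K d, A (K + d)%N \subset A K.
Proof.
move=> HA K; elim=> [|d IH]; first by rewrite addn0.
by rewrite addnS; apply: subset_trans (HA _) IH.
Qed.

Lemma chain_stab (T : finType) (A : nat -> {set T}) :
  (forall k, A k.+1 \subset A k) -> exists K, forall k, (K <= k)%N -> A k = A K.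
Proof.
move=> HA.
suff: forall n K, (#|A K| <= n)%N -> exists K', forall k, (K' <= k)%N -> A k = A K'.
  by move=> /(_ _ 0%N (leqnn _)).
elim=> [|n IH] K HK.
  exists K => k Hk; rewrite -(subnKC Hk).
  have /eqP E : A K == set0 by rewrite -cards_eq0 -leqn0.
  by rewrite E; apply/eqP; rewrite -subset0 -E chain_sub.
case: (classic (exists k, (K <= k)%N /\ A k <> A K)) => [[k [Hk Hne]]|H]; last first.
  exists K => k Hk; apply: NNPP => Hne; apply: H; by exists k.
apply: (IH k).
have Hsub : A k \subset A K by rewrite -(subnKC Hk) chain_sub.
have Hpr : A k \proper A K by rewrite properEneq Hsub andbT; apply/eqP.
by move: (proper_card Hpr) HK; lia.
Qed.

Lemma pigeon (T : finType) (W : nat -> T) :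
  exists i j, (i < j <= #|T|)%N /\ W i = W j.
Proof.
pose f (i : 'I_#|T|.+1) := W i.
have : ~~ injectiveb f.
  apply/negP => /injectiveP /leq_card; rewrite card_ord; lia.
move/injectivePn => [x [y Hxy E]].
case: (ltngtP x y) => H.
- exists x, y; split => //; rewrite H /=; exact: (ltn_ord y).
- exists y, x; split => //; rewrite H /=; exact: (ltn_ord x).
- by move: Hxy; rewrite (val_inj H) eqxx.
Qed.

Definition tr (gT : finGroupType) (t : int) (f : seqZ gT) : seqZ gT := fun n => f (n + t).

Section Core.
Variables (gT : finGroupType) (N : seqZ gT -> Prop).
Hypothesis H1 : N (@pone gT).
Hypothesis H2 : forall f g, N f -> N g -> N (pmul f g).
Hypothesis H3 : forall f, N f -> N (pinv f).
Hypothesis HT : forall t f, N f -> N (tr t f).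
Hypothesis HC : closedZ N.
Hypothesis HF : forall f, N f -> fin_supp f -> f = @pone gT.

Definition Fol (k : nat) (x : gT) : Prop :=
  exists g, N g /\ (forall n : int, 0 <= n < k%:Z -> g n = 1%g) /\ g k%:Z = x.

Lemma fol_decr k x : Fol k.+1 x -> Fol k x.
Proof.
move=> [g [Ng [Hg Hx]]]; exists (tr 1 g); split; first exact: HT.
split.
  move=> n Hn; rewrite /tr; apply: Hg; lia.
by rewrite /tr -Hx; congr g; lia.
Qed.

Lemma fol_stab : exists K, forall k, (K <= k)%N -> forall x, Fol K x -> Fol k x.
Proof.
pose A k := [set x | pb (Fol k x)].
have HA : forall k, A k.+1 \subset A k.
  move=> k; apply/subsetP => x; rewrite !inE => /pbP H; apply/pbP; exact: fol_decr.
have [K HK] := chain_stab HA.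
exists K => k Hk x Hx.
have : x \in A K by rewrite inE; apply/pbP.
by rewrite -(HK k Hk) inE => /pbP.
Qed.


Section FT.
Variable K : nat.
Hypothesis HK : forall k, (K <= k)%N -> forall x, Fol K x -> Fol k x.

Lemma ft_ext (f : seqZ gT) (a : int) (m : nat) :
  (forall t : int, exists h, N h /\ forall n, t <= n <= t + K%:Z -> h n = f n) ->
  exists g, N g /\ forall n, a <= n <= a + (K + m)%N%:Z -> g n = f n.
Proof.
move=> Hw; elim: m => [|m [g [Ng Hg]]].
  have [h [Nh Hh]] := Hw a; exists h; split => // n Hn; apply: Hh; lia.
set j := a + (K + m.+1)%N%:Z.
have [h [Nh Hh]] := Hw (j - K%:Z).
pose u := pmul h (pinv g).
have Nu : N u by apply: H2 => //; apply: H3.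
have Fu : Fol K (u j).
  exists (tr (j - K%:Z) u); split; first exact: HT.
  split; last by rewrite /tr; congr u; lia.
  move=> n Hn; rewrite /tr /u /pmul /pinv Hh; last by lia.
  by rewrite Hg ?mulgV //; lia.
have [v0 [Nv0 [Hv0 Ev0]]] := HK (leq_addr m.+1 K) Fu.
exists (pmul (tr (- a) v0) g); split; first by apply: H2 => //; apply: HT.
move=> n Hn; rewrite /pmul /tr.
have [Hn1|Hn1] := ltrP n j.
  by rewrite Hv0 ?mul1g ?Hg //; lia.
have Enj : n = j by lia.
have -> : n - a = (K + m.+1)%N%:Z by lia.
rewrite Ev0 /u /pmul /pinv Enj mulgKV Hh //; lia.
Qed.

Fixpoint sabs (S : seq int) : nat := if S is s :: S' then (`|s|%N + sabs S')%N else 0%N.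
Lemma sabs_le S s : s \in S -> (`|s|%N <= sabs S)%N.
Proof.
elim: S => [|x S IH] //=; rewrite inE => /orP [/eqP ->|/IH]; lia.
Qed.

Lemma ft (f : seqZ gT) :
  (forall t : int, exists h, N h /\ forall n, t <= n <= t + K%:Z -> h n = f n) -> N f.
Proof.
move=> Hw; apply: NNPP => Nf.
have [S HS] := HC Nf.
pose B := sabs S.
have [g [Ng Hg]] := ft_ext (- B%:Z) (B + B)%N Hw.
apply: (HS g) => // n /sabs_le Hn; apply: Hg; lia.
Qed.

Definition trunc (c R : int) (u : seqZ gT) : seqZ gT :=
  fun n => if (c <= n) && (n < R) then u n else 1%g.

Lemma trunc_in (u : seqZ gT) (c R : int) : N u ->
  (forall n, c <= n < c + K%:Z -> u n = 1%g) ->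
  (forall n, R - K%:Z <= n < R -> u n = 1%g) -> N (trunc c R u).
Proof.
move=> Nu Hc HR; apply: ft => t.
have [Htc|Htc] := ltrP t c.
  exists (@pone gT); split => // n Hn; rewrite /trunc /pone.
  case: ifP => // /andP [h1 h2]; rewrite Hc //; lia.
have [HtR|HtR] := ltrP (t + K%:Z) R.
  exists u; split => // n Hn; rewrite /trunc; case: ifP => //; lia.
exists (@pone gT); split => // n Hn; rewrite /trunc /pone.
case: ifP => // /andP [h1 h2]; rewrite HR //; lia.
Qed.

End FT.


Lemma core : exists L : nat, forall g, N g ->
  (forall n : int, 0 <= n < L%:Z -> g n = 1%g) -> g L%:Z = 1%g.
Proof.
have [K HK] := fol_stab.
pose M := #|{ffun 'I_K -> gT}|.
exists (M + K)%N => g Ng Hg.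
apply: NNPP => Hx.
pose L := (M + K)%N.
pose W (i : nat) := [ffun t : 'I_K => g (L + i + t)%N%:Z].
have [i [j [Hij HW]]] := pigeon W.
pose p := (j - i)%N.
pose u := pmul g (pinv (tr p%:Z g)).
have Nu : N u by apply: H2 => //; apply: H3; apply: HT.
pose R : int := (L + i + K)%N%:Z.
have eL : L = (M + K)%N by [].
have ep : p = (j - i)%N by [].
have eR : R = (L + i + K)%N%:Z by [].
have HjM : (i < j <= M)%N by [].
rewrite -eL in Hg; clearbody R p L M.
have Nt : N (trunc 0 R u).
  apply: (trunc_in HK) => // n Hn.
    rewrite /u /pmul /pinv /tr !Hg ?invg1 ?mulg1 //; lia.
  case: n Hn => [t|t] Hn; last by lia.
  have Ht : (t - (L + i) < K)%N by lia.
  have := congr1 (fun w : {ffun 'I_K -> gT} => w (Ordinal Ht)) HW; rewrite !ffunE /= => E.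
  rewrite /u /pmul /pinv /tr.
  have -> : t%:Z = (L + i + (t - (L + i)))%N%:Z by lia.
  rewrite E.
  have -> : ((L + i + (t - (L + i)))%N%:Z + p%:Z) = (L + j + (t - (L + i)))%N%:Z by lia.
  by rewrite mulgV.
have Ft : fin_supp (trunc 0 R u).
  exists [seq n%:Z | n <- iota 0 (L + i + K)].
  move=> n Hn; rewrite /trunc; case: ifP => // /andP [h1 h2].
  case: n Hn h1 h2 => [t|t] Hn h1 h2; last by lia.
  by move: Hn; rewrite (map_f (fun n : nat => n%:Z)) // mem_iota; lia.
have := congr1 (fun f => f (L - p)%N%:Z) (HF Nt Ft).
rewrite /trunc /pone /u /pmul /pinv /tr.
case: ifP; last by lia.
move=> _; rewrite Hg; last by lia.
have -> : ((L - p)%N%:Z + p%:Z) = L%:Z by lia.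
rewrite mul1g => /eqP; rewrite invg_eq1 eL => /eqP; exact: Hx.
Qed.

End Core.
Lemma tr_comp (gT : finGroupType) a b (f : seqZ gT) : tr a (tr b f) = tr (a + b) f.
Proof. by apply: functional_extensionality => n; rewrite /tr addrA. Qed.

Lemma tr_all (gT : finGroupType) (N : seqZ gT -> Prop) : sigma_stable N ->
  forall t f, N f -> N (tr t f).
Proof.
move=> HS.
have Hp : forall f, N f -> N (tr 1 f) by move=> f Nf; apply/HS; exists f.
have Hm : forall f, N f -> N (tr (-1) f).
  move=> h /HS [f [Nf <-]].
  have -> : tr (-1) (shift f) = f.
    by apply: functional_extensionality => n; rewrite /tr /shift addrNK.
  exact: Nf.
have Hpos : forall (k : nat) f, N f -> N (tr k%:Z f).
  elim=> [|k IH] f Nf.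
    by have -> : tr 0 f = f by apply: functional_extensionality => n; rewrite /tr addr0.
  have -> : k.+1%:Z = 1 + k%:Z by lia.
  by rewrite -tr_comp; apply: Hp; apply: IH.
have Hneg : forall (k : nat) f, N f -> N (tr (- k%:Z) f).
  elim=> [|k IH] f Nf.
    by have -> : tr (- 0%:Z) f = f by apply: functional_extensionality => n; rewrite /tr oppr0 addr0.
  have -> : - k.+1%:Z = -1 + - k%:Z by lia.
  by rewrite -tr_comp; apply: Hm; apply: IH.
move=> [k|k] f Nf; first exact: Hpos.
rewrite NegzE; exact: Hneg.
Qed.

Lemma comm_of (gT : finGroupType) (x y : gT) :
  (x^-1 * (y^-1 * (x * y)))%g = 1%g -> (x * y)%g = (y * x)%g.
Proof.
move=> H.
have := congr1 (fun z => (y * (x * z))%g) H.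
by rewrite /= mulKVg mulKVg mulg1.
Qed.

Theorem lemma6p7 (gT : finGroupType) (N : seqZ gT -> Prop) :
  is_subgroupZ N -> is_normalZ N -> closedZ N -> sigma_stable N ->
  (forall f, N f -> fin_supp f -> f = @pone gT) ->
  finite_setZ N /\ (forall f, N f -> in_centreZ f).
Proof.
move=> [H1 [H2 H3]] Hnorm HC HS HF.
have HT := tr_all HS.
have Hcen : forall f, N f -> in_centreZ f.
  move=> f Nf g; apply: functional_extensionality => n; rewrite /pmul.
  apply: comm_of.
  pose d : seqZ gT := fun m => if m == n then g n else 1%g.
  have Nc : N (pmul (pinv f) (pmul (pinv d) (pmul f d))) by apply: H2 => //; [apply: H3|apply: Hnorm].
  have Fc : fin_supp (pmul (pinv f) (pmul (pinv d) (pmul f d))).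
    exists [:: n] => m; rewrite inE /pmul /pinv /d => /negbTE ->.
    by rewrite invg1 mul1g mulg1 mulVg.
  have := congr1 (fun h => h n) (HF _ Nc Fc).
  by rewrite /pmul /pinv /d /pone eqxx.
split=> //.
have [L1 Hr] := core H1 H2 H3 HT HC HF.
pose rN (f : seqZ gT) := N (fun n => f (- n)).
have rH1 : rN (@pone gT) by exact: H1.
have rH2 : forall f g, rN f -> rN g -> rN (pmul f g) by move=> f g; exact: H2.
have rH3 : forall f, rN f -> rN (pinv f) by move=> f; exact: H3.
have rHT : forall t f, rN f -> rN (tr t f).
  move=> t f Nf; have := HT (- t) _ Nf; rewrite /rN /tr.
  have -> : (fun n => f (- (n + - t))) = (fun n => f (- n + t)).
    by apply: functional_extensionality => n; rewrite opprD opprK.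
  by [].
have rHC : closedZ rN.
  move=> f Nf; have [S HSf] := HC _ Nf.
  exists [seq - s | s <- S] => g Hg; apply: HSf => n Hn; apply: Hg.
  exact: map_f.
have rHF : forall f, rN f -> fin_supp f -> f = @pone gT.
  move=> f Nf [S HSf].
  have E : (fun n => f (- n)) = @pone gT.
    apply: HF => //; exists [seq - s | s <- S] => n Hn; apply: HSf.
    apply: contra Hn => Hn; rewrite -(opprK n); exact: map_f.
  apply: functional_extensionality => n.
  by have := congr1 (fun h => h (- n)) E; rewrite /= opprK.
have [L2 Hl] := core rH1 rH2 rH3 rHT rHC rHF.
pose L0 := (L1 + L2)%N.
have Hzero : forall f, N f -> (forall n : int, 0 <= n < L0%:Z -> f n = 1%g) -> f = @pone gT.
  move=> f Nf Hf.
  have Hright : forall d : nat, forall n : int, 0 <= n < (L0 + d)%N%:Z -> f n = 1%g.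
    elim=> [|d IH] n Hn; first by apply: Hf; lia.
    have [Hn1|Hn1] := ltrP n (L0 + d)%N%:Z; first by apply: IH; lia.
    have := Hr (tr (L0 + d - L1)%N%:Z f) (HT _ _ Nf).
    rewrite /tr.
    have -> : L1%:Z + (L0 + d - L1)%N%:Z = n by rewrite /L0; lia.
    apply=> m Hm; apply: IH; rewrite /L0; lia.
  have Hleft : forall d : nat, forall n : int, - d%:Z <= n -> f n = 1%g.
    elim=> [|d IH] n Hn.
      apply: (Hright `|n|.+1%N); lia.
    have [Hn1|Hn1] := ltrP n (- d%:Z); last by apply: IH.
    pose c : int := L2%:Z - d%:Z - 1.
    have := Hl (fun m => f (- m + c)).
    have -> : - L2%:Z + c = n by rewrite /c; lia.
    apply.
      have E : (fun n0 : int => f (- - n0 + c)) = tr c f.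
        by apply: functional_extensionality => m; rewrite /tr opprK.
      rewrite /rN /= E; exact: HT.
    move=> m Hm; apply: IH; rewrite /c; lia.
  apply: functional_extensionality => n; apply: (Hleft `|n|%N); lia.
pose win (f : seqZ gT) := [ffun t : 'I_L0 => f (t : nat)%:Z].
pose pk (w : {ffun 'I_L0 -> gT}) :=
  epsilon (inhabits (@pone gT)) (fun g => N g /\ win g = w).
exists [seq pk w | w <- enum {ffun 'I_L0 -> gT}] => f Nf.
have Hin : win f \in enum {ffun 'I_L0 -> gT} by rewrite mem_enum.
exists (index (win f) (enum {ffun 'I_L0 -> gT})); first by rewrite size_map index_mem.
rewrite (nth_map (win f)) ?index_mem // nth_index //.
have [Ng Hg] : N (pk (win f)) /\ win (pk (win f)) = win f.
  exact: (epsilon_spec (inhabits (@pone gT)) (fun g => N g /\ win g = win f) (ex_intro _ f (conj Nf erefl))).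
set g := pk (win f) in Ng Hg *.
have E : pmul f (pinv g) = @pone gT.
  apply: Hzero; first by apply: H2 => //; apply: H3.
  move=> [t|t] Ht; last by lia.
  have Ht' : (t < L0)%N by lia.
  have := congr1 (fun w : {ffun 'I_L0 -> gT} => w (Ordinal Ht')) Hg.
  by rewrite !ffunE /= /pmul /pinv => ->; rewrite mulgV.
apply: functional_extensionality => n.
have := congr1 (fun h => h n) E; rewrite /pmul /pinv /pone => /eqP.
by rewrite -eq_mulgV1 => /eqP.
Qed.
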